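(* Let $K,k,l\in\mathbb{N}$ with $K\ge k+l$ and $0\le l-k\le 2$. Let $\bar a,\bar b$ be binary sequences with $|\bar a|\ge|\bar b|$ such that $\bar a$ is top $l$ full and $\bar b$ is top $k$ full. Then $\mathrm{oe\_combine}_K(\bar a,\bar b)$ is top $l+k$ full.
   Context: A binary sequence $\bar r$ is top $k'$ full if it has the form $1^{k'}\bar r'$ for some binary $\bar r'$ (in particular $|\bar r|\ge k'$). For sequences $\bar a=\langle a_1,\dots,a_p\rangle$, $\bar b=\langle b_1,\dots,b_q\rangle$ with $p\ge q$, $\mathrm{zip}(\bar a,\bar b)=\langle a_1,b_1,a_2,b_2,\dots,a_q,b_q,a_{q+1},\dots,a_p\rangle$. The network $\mathrm{oe\_combine}_K(\bar a,\bar b)$ is defined as: let $\bar z=\mathrm{zip}(\bar a,\bar b)$; for each $i=1,\dots,\lfloor\min(K,|\bar z|-1)/2\rfloor$ replace the pair $(z_{2i},z_{2i+1})$ by $(\max(z_{2i},z_{2i+1}),\min(z_{2i},z_{2i+1}))$; return $\bar z$. *)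

(* Defs.v *)
(* Binary sequences are [seq bool] with [true] = 1, [false] = 0. *)
From mathcomp Require Import all_boot.
Set Implicit Arguments. Unset Strict Implicit. Unset Printing Implicit Defensive.

Definition top_full (k' : nat) (r : seq bool) : Prop :=
  exists r' : seq bool, r = nseq k' true ++ r'.

Fixpoint bzip (a b : seq bool) : seq bool :=
  match a, b with
  | x :: a', y :: b' => x :: y :: bzip a' b'
  | [::], _ => b
  | _, [::] => a
  end.

(* comparator (max, min) on bits: max = orb, min = andb *)
Fixpoint cmp_pairs (n : nat) (s : seq bool) : seq bool :=
  match n, s with
  | n'.+1, x :: y :: s' => (x || y) :: (x && y) :: cmp_pairs n' s'
  | _, _ => s
  end.

(* oe_combine_K(a,b): z = zip a b; for i = 1 .. floor(min(K,|z|-1)/2),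
   (z_{2i}, z_{2i+1}) := (max, min) (1-indexed).  The first element z_1
   is untouched and the pairs are (z_2,z_3), (z_4,z_5), ... *)
Definition oe_combine (K : nat) (a b : seq bool) : seq bool :=
  let z := bzip a b in
  match z with
  | [::] => [::]
  | z1 :: zs => z1 :: cmp_pairs ((minn K (size z).-1)./2) zs
  end.

(* Main.v *)
Require Import Defs.
From mathcomp Require Import all_boot.
From mathcomp Require Import zify.

Definition tailz (b a0 : seq bool) : seq bool :=
  match b with [::] => a0 | y :: b' => y :: bzip a0 b' end.

Lemma tailz_cons y b' x a0' : tailz (y :: b') (x :: a0') = y :: x :: tailz b' a0'.
Proof. by case: b'. Qed.

Lemma size_bzip a b : size (bzip a b) = size a + size b.
Proof.
elim: a b => [|x a IH] [|y b] //=; first by rewrite addn0.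
by rewrite IH addnS.
Qed.

Lemma size_tailz b a0 : size (tailz b a0) = size a0 + size b.
Proof. case: b => [|y b] /=; first by rewrite addn0. by rewrite size_bzip addnS. Qed.

Lemma tailz_nseq j b' a0' :
  tailz (nseq j true ++ b') (nseq j true ++ a0') = nseq (2 * j) true ++ tailz b' a0'.
Proof.
elim: j => [|j IH] //.
change (tailz (true :: (nseq j true ++ b')) (true :: (nseq j true ++ a0')) =
  nseq (2 * j.+1) true ++ tailz b' a0').
by rewrite tailz_cons IH mulnS.
Qed.

Lemma bzip_true a0 b : bzip (true :: a0) b = true :: tailz b a0.
Proof. by case: b. Qed.

Lemma cmp_pref m n s : exists r, cmp_pairs n (nseq m true ++ s) = nseq m true ++ r.
Proof.
elim: m {-2}m (leqnn m) n s => [|M IH] m Hm n s.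
  by move: Hm; rewrite leqn0 => /eqP ->; exists (cmp_pairs n s).
case: m Hm => [|[|m]] Hm.
- by exists (cmp_pairs n s).
- case: n => [|n] /=; first by exists s.
  case: s => [|y s] /=; first by exists [::]; case: n.
  by exists (y :: cmp_pairs n s).
- case: n => [|n] /=; first by exists s.
  have [r Hr] := IH m (ltnW Hm) n s.
  by exists r; rewrite Hr.
Qed.

Lemma cmp2 j n s : j <= n ->
  cmp_pairs n (nseq (2 * j) true ++ s) = nseq (2 * j) true ++ cmp_pairs (n - j) s.
Proof.
elim: j n => [|j IH] n Hn; first by rewrite subn0.
case: n Hn => [|n] // Hn.
by rewrite mulnS /= IH.
Qed.

Lemma nseq_snoc m s : nseq m true ++ true :: s = nseq m.+1 true ++ s.
Proof. by elim: m => //= m ->. Qed.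

Lemma fin m m' r : m' = m.+1 -> top_full m' (true :: nseq m true ++ r).
Proof. by move=> ->; exists r. Qed.

Theorem mainTheorem6 (K k l : nat) (a b : seq bool) :
  k + l <= K -> k <= l -> l - k <= 2 ->
  size b <= size a ->
  top_full l a -> top_full k b ->
  top_full (l + k) (oe_combine K a b).
Proof.
move=> HK Hkl Hd Hs [a' Ha] [b' Hb].
case: l Hkl Hd Ha HK Hs => [|l] Hkl Hd Ha HK Hs.
  have -> : k = 0 by lia.
  by exists (oe_combine K a b).
rewrite /oe_combine Ha.
have -> : nseq l.+1 true ++ a' = true :: (nseq l true ++ a') by [].
rewrite bzip_true /= size_tailz.
set n := (minn K _)./2.
have Hsz : size (nseq l true ++ a') + size b = (size a).-1 + size b by rewrite Ha.
have [d Hld] : exists d, l.+1 = k + d by exists (l.+1 - k); lia.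
rewrite Hb.
case: d Hld => [|[|[|d]]] Hld; try lia.
- have -> : k = l.+1 by lia.
  rewrite -[nseq l.+1 true ++ b']nseq_snoc tailz_nseq /= nseq_snoc.
  have [r Hr] := cmp_pref (2 * l).+1 n (bzip a' b').
  rewrite Hr; apply: fin; lia.
- have -> : l = k by lia.
  rewrite tailz_nseq.
  have [r Hr] := cmp_pref (2 * k) n (tailz b' a').
  rewrite Hr; apply: fin; lia.
- have -> : l = k.+1 by lia.
  rewrite -[nseq k.+1 true ++ a']nseq_snoc tailz_nseq.
  case: b' Hb Hs => [|y b'] Hb Hs.
  + rewrite /= nseq_snoc.
    have [r Hr] := cmp_pref (2 * k).+1 n a'.
    rewrite Hr; apply: fin; lia.
  + rewrite tailz_cons cmp2; last first.
      rewrite /n !size_cat !size_nseq; have := congr1 size Hb; rewrite size_cat size_nseq /=; lia.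
    have -> : n - k = (n - k - 1).+1.
      rewrite /n !size_cat !size_nseq; have := congr1 size Hb; rewrite size_cat size_nseq /=; lia.
    rewrite /= orbT nseq_snoc.
    apply: fin; lia.
Qed.
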